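(* Let $\mathsf{K}$ be a commutative idempotent semiring, $N\ge1$, $\mathsf{A}\in\mathsf{K}^{N\times N}$, $\mathsf{b}\in\mathsf{K}^{N\times1}$, $\mathsf{c}\in\mathsf{K}^{1\times N}$, and $\mathsf{S}_N=\mathsf{c}(\mathsf{A}X)^*\mathsf{b}\in\mathsf{K}[[X]]$. Then $$\mathsf{S}_N=\bigoplus_{\pi\in\mathscr{P}_N}w(\pi)\Big(\bigoplus_{C\in\mathscr{A}(\pi)}\ \bigotimes_{\gamma\in C}w(\gamma)^+\Big),$$ where the term corresponding to $C=\emptyset$ is $\mathbb{1}$ (and $\emptyset\in\mathscr{A}(\pi)$ for every $\pi$).
   Context: $(\mathsf{A}X)^*=\bigoplus_{k\ge0}\mathsf{A}^kX^k$, so $\mathsf{S}_N=\bigoplus_k \mathsf{c}\mathsf{A}^k\mathsf{b}\,X^k$. For a series $U$ with zero constant coefficient, $U^*=\bigoplus_{k\ge0}U^k$ and $U^+=UU^*$. The digraph $G_N$ has nodes $1,\dots,N$, an input node $in$ and an output node $out$; arcs $j\to i$ with weight $\mathsf{A}_{ij}X$ for $1\le i,j\le N$, arcs $in\to i$ with weight $\mathsf{b}_i$, and arcs $i\to out$ with weight $\mathsf{c}_i$. The weight $w(\pi)$ of a path is the product of the weights of its arcs. A path is elementary if it has no repeated node; an elementary circuit is a closed path with no repeated node other than its common start and end. Two circuits are cyclic conjugates if one is obtained from the other by a circular permutation; by commutativity conjugates have equal weight, so $w(\gamma)$ is defined for a conjugacy class $\gamma$. $\mathscr{C}_N$ is the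 set of conjugacy classes of elementary circuits of $G_N$; $\mathscr{P}_N$ is the set of elementary paths from $in$ to $out$. For a path $\pi$, a set $C\subseteq\mathscr{C}_N$ is accessible from $\pi$ if the union of the circuits of $C$ and of the path $\pi$ is a connected subgraph in the undirected sense; $\mathscr{A}(\pi)$ is the set of subsets $C\subseteq\mathscr{C}_N$ accessible from $\pi$. *)

(* Defs.v *)
From HB Require Import structures.
From mathcomp Require Import all_boot all_order all_algebra.
Set Implicit Arguments. Unset Strict Implicit. Unset Printing Implicit Defensive.
Import GRing.Theory.
Local Open Scope ring_scope.

Section Series.
Variable K : comPzSemiRingType.

Definition series := nat -> K.

Definition szero : series := fun _ => 0.
Definition sone : series := fun n => if n is 0%N then 1 else 0.
Definition sconst (a : K) : series := fun n => if n is 0%N then a else 0.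
Definition smonX (a : K) : series := fun n => if n == 1%N then a else 0.
Definition sadd (f g : series) : series := fun n => f n + g n.
Definition smul (f g : series) : series :=
  fun n => \sum_(i < n.+1) f i * g (n - i)%N.
Definition spow (U : series) (k : nat) : series := iter k (smul U) sone.
(** U^* = (+)_{k>=0} U^k, for U with zero constant coefficient: the
    coefficient of X^n only receives contributions from k <= n. *)
Definition sstar (U : series) : series :=
  fun n => \sum_(k < n.+1) spow U k n.
Definition splus (U : series) : series := smul U (sstar U).

End Series.

Section Graph.
Variables (K : comPzSemiRingType) (N : nat).

(** Nodes of G_N : inl i is the node i (i in 1..N, encoded by 'I_N),
    inr false is the input node [in], inr true is the output node [out]. *)
Definition node := ('I_N + bool)%type.
Definition node_in : node := inr false.
Definition node_out : node := inr true.

Definition arc (u v : node) : bool :=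
  match u, v with
  | inl _, inl _ => true
  | inr false, inl _ => true
  | inl _, inr true => true
  | _, _ => false
  end.

Variables (A : 'M[K]_N) (b : 'cV[K]_N) (c : 'rV[K]_N).

(** weight of the arc u -> v (only meaningful when arc u v) *)
Definition arcw (u v : node) : series K :=
  match u, v with
  | inl j, inl i => smonX (A i j)
  | inr false, inl i => sconst (b i ord0)
  | inl i, inr true => sconst (c ord0 i)
  | _, _ => szero K
  end.

Definition path_arcs (p : seq node) : seq (node * node) := zip p (behead p).

Definition pathw (p : seq node) : series K :=
  \big[@smul K/sone K]_(e <- path_arcs p) arcw e.1 e.2.

Definition elem_path (p : seq node) : bool :=
  match p with
  | [::] => false
  | x :: p' => [&& x == node_in, path arc x p', last x p' == node_out & uniq p]
  end.

Definition circ_arcs (s : seq node) : seq (node * node) := zip s (rot 1 s).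

Definition elem_circ (s : seq node) : bool :=
  [&& s != [::], cycle arc s & uniq s].

(** A conjugacy class of elementary circuits is represented by its set of
    arcs (two elementary circuits are cyclic conjugates iff they have the same
    arc set). [circ_class E] : E is the arc set of an elementary circuit. *)
Definition circ_class (E : {set node * node}) : bool :=
  [exists n : 'I_(#|{: node}|.+1), exists t : n.-tuple node,
     elem_circ t && (E == [set e in circ_arcs t])].

(** weight of a conjugacy class = weight of any representative circuit
    = product of the weights of its (pairwise distinct) arcs *)
Definition circw (E : {set node * node}) : series K :=
  \big[@smul K/sone K]_(e in E) arcw e.1 e.2.

Definition verts (E : {set node * node}) : {set node} :=
  [set x | [exists e in E, (e.1 == x) || (e.2 == x)]].
Definition accessible (p : seq node) (C : {set {set node * node}}) : bool :=
  [forall E in C, circ_class E] &&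
  [forall x, forall y,
     let Etot := [set e in path_arcs p] :|: \bigcup_(E in C) E in
     (x \in verts Etot) ==> (y \in verts Etot) ==>
     connect (fun u v => ((u, v) \in Etot) || ((v, u) \in Etot)) x y].

(** S_N = c (A X)^* b = (+)_k c A^k b X^k *)
Definition S_N : series K := fun k => (c *m (A ^+ k) *m b) ord0 ord0.

(** right-hand side of the proposition; elementary paths have at most
    #|node| nodes, so summing over tuples of length n <= #|node| enumerates
    P_N exactly once. *)
Definition rhs : series K :=
  \big[@sadd K/szero K]_(n < #|{: node}|.+1)
   \big[@sadd K/szero K]_(t : n.-tuple node | elem_path t)
     smul (pathw t)
       (\big[@sadd K/szero K]_(C : {set {set node * node}} | accessible t C)
          \big[@smul K/sone K]_(E in C) splus (circw E)).

End Graph.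

(* Main.v *)
Require Import Defs.
From HB Require Import structures.
From mathcomp Require Import all_boot all_order all_algebra.
From Stdlib Require Import FunctionalExtensionality.
Import GRing.Theory.
Set Implicit Arguments. Unset Strict Implicit. Unset Printing Implicit Defensive.

Section G.
Variable N : nat.
Local Notation node := (node N).
Local Notation pa := (@path_arcs N).
Local Notation nin := (node_in N).
Local Notation nout := (node_out N).

Lemma pa_cons (x : node) s :
  pa (x :: s) = if s is z :: _ then (x, z) :: pa s else [::].
Proof. by case: s. Qed.

Lemma pa_cat (s1 : seq node) y s2 :
  pa (s1 ++ y :: s2) = pa (rcons s1 y) ++ pa (y :: s2).
Proof.
elim: s1 => [//|x s1 IH] /=.
rewrite pa_cons [pa (x :: rcons s1 y)]pa_cons IH.
by case: s1 {IH}.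
Qed.

Lemma pa_rcons (x : node) s y :
  pa (x :: rcons s y) = rcons (pa (x :: s)) (last x s, y).
Proof.
elim: s x => [//|z s IH] x /=.
by rewrite pa_cons IH.
Qed.

Lemma mem_pa (s : seq node) u v : (u, v) \in pa s -> (u \in s) && (v \in s).
Proof.
elim: s => [//|x s IH]; rewrite pa_cons.
case: s IH => [//|z s] IH; rewrite in_cons => /orP [/eqP [-> ->]|/IH /andP [h1 h2]].
  by rewrite !in_cons !eqxx orbT.
by rewrite (in_cons x _ u) (in_cons x _ v) h1 h2 !orbT.
Qed.

Lemma path_pa (e : rel node) x p : path e x p = all (fun u => e u.1 u.2) (pa (x :: p)).
Proof.
elim: p x => [//|z p IH] x /=.
by rewrite IH.
Qed.

Lemma circ_arcs_cons (x : node) s : circ_arcs (x :: s) = pa (x :: rcons s x).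
Proof.
rewrite /circ_arcs rot1_cons /path_arcs /=.
suff H : forall y x0, zip (x0 :: s) (rcons s y) = zip (x0 :: rcons s y) (rcons s y) by apply: H.
elim: s => [//|z s IH] y x0 /=.
by rewrite IH.
Qed.

Lemma drop_zip' (S T : Type) k (s : seq S) (t : seq T) :
  drop k (zip s t) = zip (drop k s) (drop k t).
Proof. by elim: k s t => [|k IH] [|x s] [|y t] //=; case: (drop _ _). Qed.

Lemma take_zip' (S T : Type) k (s : seq S) (t : seq T) :
  take k (zip s t) = zip (take k s) (take k t).
Proof. elim: k s t => [|k IH] [|x s] [|y t] //=; try by case: (take _ _). by rewrite IH. Qed.

Lemma zip_rot (S T : Type) k (s : seq S) (t : seq T) :
  size s = size t -> zip (rot k s) (rot k t) = rot k (zip s t).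
Proof.
move=> hs; rewrite /rot zip_cat ?size_drop ?hs //.
by rewrite drop_zip' take_zip'.
Qed.

Lemma circ_rot k (s : seq node) : perm_eq (circ_arcs (rot k s)) (circ_arcs s).
Proof.
rewrite /circ_arcs rot_rot zip_rot ?size_rot //.
by rewrite perm_rot.
Qed.

Lemma mem_circ_arcs (s : seq node) u v : (u, v) \in circ_arcs s -> (u \in s) && (v \in s).
Proof.
case: s => [//|x s]; rewrite circ_arcs_cons => /mem_pa.
by rewrite !in_cons !mem_rcons !in_cons; case/andP=> /orP[->|->] /orP[->|->]; rewrite ?orbT.
Qed.

Lemma circ_arcs_uniq (s : seq node) : uniq s -> uniq (circ_arcs s).
Proof. by move=> hs; apply: zip_uniql. Qed.

Lemma circ_arcs_out (s : seq node) y : y \in s -> exists z, (y, z) \in circ_arcs s.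
Proof.
move=> hy; exists (nth y (rot 1 s) (index y s)).
have <- : nth (y, y) (circ_arcs s) (index y s) = (y, nth y (rot 1 s) (index y s)).
  by rewrite /circ_arcs nth_zip ?size_rot // nth_index.
by apply: mem_nth; rewrite /circ_arcs size_zip size_rot minnn index_mem.
Qed.

End G.

Definition lpow (T : Type) (l : seq T) k := iter k (cat l) [::].

Lemma lpow_perm (T : eqType) (l1 l2 : seq T) k : perm_eq l1 l2 -> perm_eq (lpow l1 k) (lpow l2 k).
Proof. by move=> h; elim: k => [//|k IH] /=; apply: perm_cat. Qed.

Lemma split_mem (T : eqType) (x : T) s : x \in s -> exists a b, s = a ++ x :: b.
Proof. by case/splitPr => a b; exists a, b. Qed.

Lemma split_loop (T : eqType) (s : seq T) :
  ~~ uniq s -> exists p1 y q r, s = p1 ++ y :: q ++ y :: r /\ uniq (y :: q).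
Proof.
elim: s => [//|a s IH] /=; rewrite negb_and negbK.
case: (boolP (uniq s)) => hu.
  rewrite orbF => ha; move: hu; case/splitPr: ha => q r hu.
  exists [::], a, q, r; split => //=.
  move: hu; rewrite cat_uniq => /and3P [-> /hasPn h _]; rewrite andbT.
  exact: h _ (mem_head _ _).
move=> _; case: (IH hu) => p1 [y [q [r [-> h]]]].
by exists (a :: p1), y, q, r.
Qed.

Section G2.
Variable N : nat.
Local Notation node := (node N).
Local Notation pa := (@path_arcs N).
Local Notation nin := (node_in N).
Local Notation nout := (node_out N).
Local Notation darc := (@Defs.arc N).

Definition arcb (e : node * node) := darc e.1 e.2.
Definition walk (w : seq node) :=
  [&& head nout w == nin, last nin w == nout & all arcb (pa w)].

Lemma walk_cons x p : walk (x :: p) = [&& x == nin, last x p == nout & path darc x p].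
Proof. by rewrite /walk path_pa. Qed.

Lemma elem_path_walk (t : seq node) : elem_path t = walk t && uniq t.
Proof. by case: t => [//|x p]; rewrite walk_cons /= -!andbA; do !bool_congr. Qed.

Lemma arc_in (u : node) : darc u (inr false) = false.
Proof. by case: u => [?|[]]. Qed.
Lemma arc_out (v : node) : darc (inr true) v = false.
Proof. by case: v. Qed.

Definition deg1 (e : node * node) : nat :=
  match e with (inl _, inl _) => 1 | _ => 0 end.
Definition deg (l : seq (node * node)) : nat := \sum_(e <- l) deg1 e.

Lemma deg_cat l1 l2 : deg (l1 ++ l2) = deg l1 + deg l2.
Proof. by rewrite /deg big_cat. Qed.

Lemma deg_perm l1 l2 : perm_eq l1 l2 -> deg l1 = deg l2.
Proof. by move=> h; rewrite /deg (perm_big _ h). Qed.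

Lemma circ_inner (g : seq node) x : elem_circ g -> x \in g -> exists j, x = inl j.
Proof.
case/and3P=> _ hc _ hx.
have h1 := next_cycle hc hx; have h2 := prev_cycle hc hx.
case: x hx h1 h2 => [j|[]] _ h1 h2; first by exists j.
  by rewrite arc_out in h1.
by rewrite arc_in in h2.
Qed.

Lemma circ_deg (g : seq node) : elem_circ g -> 0 < deg (circ_arcs g).
Proof.
move=> hg; have := hg; case/and3P => /eqP hne _ _.
case: g hg hne => [//|x s] hg _.
have hx : x \in x :: s by rewrite mem_head.
case: (circ_arcs_out hx) => z hz.
have /andP [_ hzin] := mem_circ_arcs hz.
have [j ex] := circ_inner hg hx; have [i ez] := circ_inner hg hzin.
by rewrite /deg (big_rem _ hz) /= ex ez.
Qed.

Lemma mk_circ_class (g : seq node) : elem_circ g -> circ_class [set e in circ_arcs g].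
Proof.
move=> hg; have := hg; case/and3P => _ _ hu.
have h : size g < #|{: node}|.+1.
  by rewrite ltnS -(card_uniqP hu) max_card.
apply/existsP; exists (Ordinal h); apply/existsP; exists (in_tuple g).
by rewrite /= hg eqxx.
Qed.

Lemma walk_cut (w : seq node) : walk w -> ~~ uniq w ->
  exists w' g, [/\ walk w', elem_circ g, perm_eq (pa w) (pa w' ++ circ_arcs g) & size w' < size w].
Proof.
move=> hw /split_loop [p1 [y [q [r [ew hu]]]]].
exists (p1 ++ y :: r), (y :: q).
have epw : pa w = pa (rcons p1 y) ++ (pa (y :: rcons q y) ++ pa (y :: r)).
  rewrite ew pa_cat; congr (_ ++ _).
  by have := pa_cat (y :: q) y r; rewrite cat_cons.
have epw' : pa (p1 ++ y :: r) = pa (rcons p1 y) ++ pa (y :: r) by rewrite pa_cat.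
move: hw; rewrite /walk => /and3P [hh hl ha].
split.
- apply/and3P; split.
  + by move: hh; rewrite ew; case: p1 {ew epw epw'}.
  + by move: hl; rewrite ew !last_cat /= last_cat.
  + by move: ha; rewrite epw epw' !all_cat => /and3P [-> _ ->].
- rewrite /elem_circ hu andbT /= -/(cycle darc (y :: q)) /=.
  by rewrite path_pa; move: ha; rewrite epw !all_cat => /and3P [_ -> _].
- rewrite epw epw' circ_arcs_cons -catA perm_cat2l.
  by rewrite perm_catC.
- by rewrite ew !size_cat /= size_cat /= ltn_add2l ltnS leq_addl.
Qed.

End G2.

Section G3.
Variable N : nat.
Local Notation node := (node N).
Local Notation pa := (@path_arcs N).
Local Notation nin := (node_in N).
Local Notation nout := (node_out N).
Local Notation darc := (@Defs.arc N).
Local Notation walk := (@walk N).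

Lemma walk_split (p1 : seq node) z p2 :
  walk (p1 ++ z :: p2) =
  [&& head z p1 == nin, last z p2 == nout, all (@arcb N) (pa (rcons p1 z)) & all (@arcb N) (pa (z :: p2))].
Proof.
rewrite /walk pa_cat all_cat last_cat /=.
by case: p1.
Qed.

Lemma splice1 (p1 : seq node) z p2 s :
  walk (p1 ++ z :: p2) -> path darc z (rcons s z) ->
  walk (p1 ++ z :: s ++ z :: p2) /\
  perm_eq (pa (p1 ++ z :: s ++ z :: p2)) (pa (p1 ++ z :: p2) ++ pa (z :: rcons s z)).
Proof.
have e : pa (p1 ++ z :: s ++ z :: p2) = pa (rcons p1 z) ++ (pa (z :: rcons s z) ++ pa (z :: p2)).
  rewrite pa_cat; congr (_ ++ _).
  by have := pa_cat (z :: s) z p2; rewrite cat_cons.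
rewrite !walk_split path_pa => /and4P [h1 h2 h3 h4] hc.
split.
  rewrite h1 h3 /= last_cat /= h2 /=.
  by have := pa_cat (z :: s) z p2; rewrite cat_cons => ->; rewrite all_cat h4 andbT; exact: hc.
by rewrite e pa_cat -catA perm_cat2l perm_catC.
Qed.

Lemma splice_iter m (p1 : seq node) z p2 s :
  walk (p1 ++ z :: p2) -> path darc z (rcons s z) ->
  exists w1, [/\ walk w1, perm_eq (pa w1) (pa (p1 ++ z :: p2) ++ lpow (pa (z :: rcons s z)) m),
    {subset p1 ++ z :: p2 <= w1} & (0 < m -> {subset s <= w1})].
Proof.
elim: m p2 => [|m IH] p2 hw hc.
  by exists (p1 ++ z :: p2); split => //; rewrite cats0.
have [hw2 hp2] := splice1 hw hc.
have [w1 [h1 h2 h3 h4]] := IH (s ++ z :: p2) hw2 hc.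
exists w1; split => //.
- apply: perm_trans h2 _; rewrite /= catA perm_cat2r //.
- move=> x hx; apply: h3; move: hx; rewrite !mem_cat !in_cons mem_cat.
  rewrite in_cons; by case/or3P => ->; rewrite ?orbT.
- move=> _ x hx; apply: h3; by rewrite mem_cat in_cons mem_cat hx !orbT.
Qed.

Lemma splice_all (R : rel node) n (cs : seq (seq node * nat)) (w : seq node) :
  size cs <= n -> walk w ->
  all (fun p => elem_circ p.1 && (0 < p.2)) cs ->
  (forall u v, R u v -> ((u \in w) && (v \in w)) \/ exists2 p, p \in cs & (u \in p.1) && (v \in p.1)) ->
  (forall p, p \in cs -> forall y, y \in p.1 -> exists2 x, x \in w & connect R x y) ->
  exists w', walk w' /\ perm_eq (pa w') (pa w ++ flatten [seq lpow (circ_arcs p.1) p.2 | p <- cs]).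
Proof.
elim: n cs w => [|n IH] cs w.
  by rewrite leqn0 => /nilP -> hw _ _ _; exists w; rewrite cats0.
move=> hs hw hall hR hconn.
case: (boolP (has (fun p => has (mem w) p.1) cs)) => [hhas|hno]; last first.
  case: cs hs hall hR hconn hno => [|[g0 m0] cs] hs hall hR hconn hno.
    by exists w; rewrite cats0.
  exfalso.
  have /andP [/and3P [hne _ _] _] : elem_circ g0 && (0 < m0) by case/andP: hall.
  case: g0 hne hs hall hR hconn hno => [//|y g'] _ hs hall hR hconn hno.
  have [x hx hcon] := hconn _ (mem_head _ _) y (mem_head _ _).
  have hcl : closed R (mem w).
    move=> u v /hR [/andP [-> ->] //|[p hp /andP [hu hv]]].
    have hp' : ~~ has (mem w) p.1 by apply: (hasPn hno).
    have hu' : u \notin w by exact: (hasPn hp' _ hu).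
    have hv' : v \notin w by exact: (hasPn hp' _ hv).
    by rewrite (negbTE hu') (negbTE hv').
  have := closed_connect hcl hcon; rewrite hx => /esym hyw.
  move/hasPn: hno => /(_ _ (mem_head _ _)) /hasPn /(_ y (mem_head _ _)).
  by rewrite /= hyw.
case/hasP: hhas => [[g m] hp /hasP [z hzg hzw]] /=.
have /andP [hg hm] : elem_circ g && (0 < m) by apply: (allP hall _ hp).
have [a [b' eg]] := split_mem (hzg : z \in g).
have hrot : rot (size a) g = z :: (b' ++ a) by rewrite eg rot_size_cat.
have hcyc : path darc z (rcons (b' ++ a) z).
  have := hg; case/and3P => _ + _; rewrite -(rot_cycle (size a)) hrot //.
have hperm : perm_eq (pa (z :: rcons (b' ++ a) z)) (circ_arcs g).
  by rewrite -circ_arcs_cons -hrot circ_rot.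
have [p1 [p2 ew]] := split_mem hzw.
rewrite ew in hw.
have [w1 [hw1 hpw1 hsub1 hsub2]] := splice_iter m hw hcyc.
have hsub : {subset w <= w1} by rewrite ew.
have hgw1 : {subset g <= w1}.
  move=> x; rewrite eg mem_cat in_cons => /orP [ha|/orP [/eqP ->|hb]].
  - by apply: (hsub2 hm); rewrite mem_cat ha orbT.
  - by apply: hsub; rewrite ew mem_cat mem_head orbT.
  - by apply: (hsub2 hm); rewrite mem_cat hb.
have hrem := perm_to_rem hp.
have [w' [hw' hpw']] : exists w', walk w' /\ perm_eq (pa w') (pa w1 ++ flatten [seq lpow (circ_arcs p.1) p.2 | p <- rem (g, m) cs]).
  apply: IH => //.
  - by move: hs; rewrite (size_rem hp); case: (size cs).
  - by apply/allP => q /mem_rem hq; apply: (allP hall).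
  - move=> u v /hR [/andP [hu hv]|[q hq /andP [hu hv]]].
      by left; rewrite (hsub _ hu) (hsub _ hv).
    case: (eqVneq q (g, m)) => [eq|ne].
      by left; move: hu hv; rewrite eq /= => hu hv; rewrite (hgw1 _ hu) (hgw1 _ hv).
    right; exists q => //; last by rewrite hu hv.
    by move: hq; rewrite (perm_mem hrem) in_cons (negbTE ne).
  - move=> q /mem_rem hq y hy; have [x hx hc] := hconn q hq y hy.
    by exists x => //; apply: hsub.
exists w'; split => //.
apply: perm_trans hpw' _.
apply: perm_trans (perm_cat hpw1 (perm_refl _)) _.
rewrite -ew -catA perm_cat2l.
rewrite perm_sym; apply: perm_trans (perm_flatten (perm_map _ hrem)) _.
by rewrite /= perm_cat2r lpow_perm // perm_sym.
Qed.

Lemma walk_conn (R : rel node) x p :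
  (forall e, e \in pa (x :: p) -> R e.1 e.2) -> forall y, y \in x :: p -> connect R x y.
Proof.
elim: p x => [|z p IH] x hR y.
  by rewrite mem_seq1 => /eqP ->; apply: connect0.
rewrite in_cons => /orP [/eqP ->|hy]; first exact: connect0.
apply: (connect_trans (connect1 (hR (x, z) _))); first by rewrite pa_cons mem_head.
apply: IH => // e he; apply: hR; rewrite pa_cons in_cons he orbT //.
Qed.

End G3.

Section G4.
Variable N : nat.
Local Notation node := (node N).
Local Notation pa := (@path_arcs N).
Local Notation walk := (@walk N).
Local Notation deg := (@deg N).

Lemma count_perm (T : eqType) (s1 s2 : seq T) x : perm_eq s1 s2 -> count_mem x s1 = count_mem x s2.
Proof. by move/permP. Qed.

Lemma decomp n (w : seq node) : size w <= n -> walk w ->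
  exists t (C : {set {set node * node}}) (k : {set node * node} -> nat),
  [/\ walk t && uniq t, {in C, forall E, circ_class E}, {in C, forall E, k E < deg (pa w)},
      forall e, count_mem e (pa w) = count_mem e (pa t) + \sum_(E in C) (k E).+1 * (e \in E)
    & [set e in pa w] = [set e in pa t] :|: \bigcup_(E in C) E].
Proof.
elim: n w => [|n IH] w hs hw.
  by move: hs hw; rewrite leqn0 => /nilP ->.
case: (boolP (uniq w)) => hu.
  exists w, set0, (fun _ => 0); split => //; first by rewrite hw.
  - by move=> E; rewrite inE.
  - by move=> E; rewrite inE.
  - by move=> e; rewrite big_set0 addn0.
  - by rewrite big_set0 setU0.
have [w' [g [hw' hg hperm hsz]]] := walk_cut hw hu.
have [t [C [k [ht hC hk hcnt hset]]]] := IH w' (leq_trans (ltnSn _) (leq_trans hsz hs)) hw'.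
set E0 := [set e in circ_arcs g].
have hdg := circ_deg hg.
have degw : deg (pa w) = deg (pa w') + deg (circ_arcs g) by rewrite (deg_perm hperm) deg_cat.
have hug : uniq (circ_arcs g) by apply: circ_arcs_uniq; case/and3P: hg.
pose k' E := if E == E0 then (if E0 \in C then (k E0).+1 else 0) else k E.
exists t, (E0 |: C), k'; split => //.
- move=> E; rewrite in_setU1 => /orP [/eqP ->|]; [exact: mk_circ_class|exact: hC].
- move=> E hE; rewrite /k' degw.
  case: eqP => [eE|nE].
    case: (boolP (E0 \in C)) => h0; last by rewrite (leq_trans hdg) ?leq_addl.
    by rewrite -addn1 leq_add // hk.
  move: hE; rewrite in_setU1 => /orP [/eqP //|hE].
  by rewrite (leq_trans (hk _ hE)) ?leq_addr.
- move=> e; rewrite (count_perm _ hperm) count_cat hcnt -addnA; congr (_ + _).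
  rewrite count_uniq_mem //.
  have -> : (e \in circ_arcs g) = (e \in E0) by rewrite inE.
  case: (boolP (E0 \in C)) => h0.
    have -> : E0 |: C = C by apply/setUidPr; rewrite sub1set.
    rewrite (bigD1 E0) //= (bigD1 E0 h0) /= /k' eqxx h0.
    rewrite addnAC; congr (_ + _); first by rewrite !mulSn addnC.
    by apply: eq_bigr => E /andP [_ /negbTE ->].
  rewrite big_setU1 //= /k' eqxx (negbTE h0) mul1n addnC; congr (_ + _).
  apply: eq_bigr => E hE; case: eqP => // eE.
  by move: h0; rewrite -eE hE.
- have -> : [set e in pa w] = [set e in pa w'] :|: E0.
    by apply/setP => e; rewrite !inE (perm_mem hperm) mem_cat.
  rewrite hset bigcup_setU big_set1.
  by rewrite -setUA [E0 :|: _]setUC.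
Qed.

End G4.

Section Alg.
Variable K : comPzSemiRingType.
Local Open Scope ring_scope.

Lemma sum_pick (F : nat -> K) (n d : nat) :
  \sum_(i < n.+1) (if d == i :> nat then F i else 0) = if (d <= n)%N then F d else 0.
Proof.
elim: n => [|n IH].
  by rewrite big_ord1 /=; case: d.
rewrite big_ord_recr /= IH.
case: (ltngtP d n.+1) => h.
- by rewrite addr0 -ltnS h.
- by rewrite addr0 leqNgt (ltnW h).
- by rewrite h ltnn add0r.
Qed.

Lemma prod_sums (I J : Type) (r1 : seq I) (r2 : seq J) (P : pred I) (Q : pred J) (F : I -> K) (G : J -> K) :
  (\sum_(x <- r1 | P x) F x) * (\sum_(y <- r2 | Q y) G y) =
  \sum_(x <- r1) \sum_(y <- r2) (if P x && Q y then F x * G y else 0).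
Proof.
rewrite big_mkcond mulr_suml; apply: eq_bigr => x _.
rewrite mulr_sumr big_mkcond; apply: eq_bigr => y _.
by case: (P x); case: (Q y); rewrite /= ?mul0r ?mulr0.
Qed.

Definition teq n (f g : series K) := forall m, (m <= n)%N -> f m = g m.

Lemma teq_refl n f : teq n f f. Proof. by []. Qed.

Lemma teq_add n f f' g g' : teq n f f' -> teq n g g' -> teq n (sadd f g) (sadd f' g').
Proof. by move=> h1 h2 m hm; rewrite /sadd h1 // h2. Qed.

Lemma teq_mul n f f' g g' : teq n f f' -> teq n g g' -> teq n (smul f g) (smul f' g').
Proof.
move=> h1 h2 m hm; rewrite /smul; apply: eq_bigr => i _.
have hi : (i <= m)%N by rewrite -ltnS.
by rewrite h1 ?(leq_trans hi) // h2 // (leq_trans (leq_subr _ _)).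
Qed.

Lemma teq_bigadd n (I : Type) (r : seq I) (P : pred I) (F G : I -> series K) :
  (forall i, P i -> teq n (F i) (G i)) ->
  teq n (\big[@sadd K/szero K]_(i <- r | P i) F i) (\big[@sadd K/szero K]_(i <- r | P i) G i).
Proof. move=> h; apply: (big_ind2 (fun x y => teq n x y)) => //; exact: teq_add. Qed.

Lemma teq_bigmul n (I : Type) (r : seq I) (P : pred I) (F G : I -> series K) :
  (forall i, P i -> teq n (F i) (G i)) ->
  teq n (\big[@smul K/sone K]_(i <- r | P i) F i) (\big[@smul K/sone K]_(i <- r | P i) G i).
Proof. move=> h; apply: (big_ind2 (fun x y => teq n x y)) => //; exact: teq_mul. Qed.

Variable N : nat.
Variables (A : 'M[K]_N) (b : 'cV[K]_N) (c : 'rV[K]_N).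
Local Notation node := (node N).
Local Notation pa := (@path_arcs N).
Local Notation deg := (@deg N).
Local Notation arcE := (node * node)%type.

Definition coef (e : arcE) : K :=
  match e with
  | (inl j, inl i) => A i j
  | (inr false, inl i) => b i ord0
  | (inl i, inr true) => c ord0 i
  | _ => 0
  end.

Definition val (l : seq arcE) : K := \prod_(e <- l) coef e.

Definition fser (s : seq (seq arcE)) : series K :=
  fun n => \sum_(l <- s | deg l == n) val l.

Definition allcat (s t : seq (seq arcE)) := [seq x ++ y | x <- s, y <- t].

Lemma sum_allcat s t (F : seq arcE -> K) :
  \sum_(z <- allcat s t) F z = \sum_(x <- s) \sum_(y <- t) F (x ++ y).
Proof.
elim: s => [|x s IH]; first by rewrite /allcat /= !big_nil.
by rewrite /allcat /= big_cat -/(allcat s t) IH big_map big_cons.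
Qed.

Lemma val_cat l1 l2 : val (l1 ++ l2) = val l1 * val l2.
Proof. by rewrite /val big_cat. Qed.

Lemma val_perm l1 l2 : perm_eq l1 l2 -> val l1 = val l2.
Proof. by move=> h; rewrite /val (perm_big _ h). Qed.

Lemma fser1 l n : fser [:: l] n = if deg l == n then val l else 0.
Proof. by rewrite /fser big_cons big_nil; case: ifP => _; rewrite ?addr0. Qed.

Lemma arcw_fser (u v : node) : arcw A b c u v = fser [:: [:: (u, v)]].
Proof.
apply: functional_extensionality => n.
rewrite fser1 /val /deg !big_seq1.
case: u => [j|[]]; case: v => [i|[]] /=; rewrite /szero /sconst /smonX;
  by case: n => [|[|n]].
Qed.

Lemma fser_cat s t : sadd (fser s) (fser t) = fser (s ++ t).
Proof. by apply: functional_extensionality => n; rewrite /sadd /fser big_cat. Qed.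

Lemma fser_nil : szero K = fser [::].
Proof. by apply: functional_extensionality => n; rewrite /fser big_nil. Qed.

Lemma fser_one : sone K = fser [:: [::]].
Proof.
apply: functional_extensionality => n; rewrite fser1 /deg /val !big_nil.
by case: n.
Qed.

Lemma fser_mul s t : smul (fser s) (fser t) = fser (allcat s t).
Proof.
apply: functional_extensionality => n.
rewrite /smul /fser [RHS]big_mkcond sum_allcat /=.
under eq_bigr do rewrite prod_sums.
rewrite exchange_big /=; apply: eq_bigr => x _.
rewrite exchange_big /=; apply: eq_bigr => y _.
rewrite deg_cat val_cat.
transitivity (\sum_(i < n.+1) (if deg x == i :> nat then (if deg y == (n - i)%N then val x * val y else 0) else 0)).
  by apply: eq_bigr => i _; case: (deg x == i).
rewrite (sum_pick (fun i => if deg y == (n - i)%N then val x * val y else 0)).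
case: (leqP (deg x) n) => h.
  congr (if _ then _ else _); apply/eqP/eqP => [->|<-]; [exact: subnKC|by rewrite addKn].
case: eqP => // e; by move: h; rewrite -e ltnNge leq_addr.
Qed.

Lemma fser_bigcat (I : Type) (r : seq I) (P : pred I) (F : I -> seq (seq arcE)) :
  fser (\big[cat/[::]]_(i <- r | P i) F i) = \big[@sadd K/szero K]_(i <- r | P i) fser (F i).
Proof. apply: (big_morph fser) => [x y|]; [by rewrite fser_cat|exact: esym fser_nil]. Qed.

Lemma fser_bigallcat (I : Type) (r : seq I) (P : pred I) (F : I -> seq (seq arcE)) :
  fser (\big[allcat/[:: [::]]]_(i <- r | P i) F i) = \big[@smul K/sone K]_(i <- r | P i) fser (F i).
Proof. apply: (big_morph fser) => [x y|]; [by rewrite fser_mul|exact: esym fser_one]. Qed.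

Lemma bigallcat1 (r : seq arcE) (P : pred arcE) :
  \big[allcat/[:: [::]]]_(e <- r | P e) [:: [:: e]] = [:: [seq e <- r | P e]].
Proof.
elim: r => [|e r IH]; first by rewrite big_nil.
by rewrite big_cons /=; case: (P e); rewrite IH.
Qed.

Lemma bigallcat1' (r : seq arcE) :
  \big[allcat/[:: [::]]]_(e <- r) [:: [:: e]] = [:: r].
Proof.
elim: r => [|e r IH]; first by rewrite big_nil.
by rewrite big_cons IH.
Qed.

Lemma pathw_fser (t : seq node) : pathw A b c t = fser [:: pa t].
Proof.
rewrite /pathw (eq_bigr (fun e => fser [:: [:: e]])); last by case=> u v _; rewrite arcw_fser.
by rewrite -fser_bigallcat bigallcat1'.
Qed.

Definition cl (E : {set arcE}) : seq arcE := [seq e <- index_enum _ | e \in E].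

Lemma circw_fser (E : {set arcE}) : circw A b c E = fser [:: cl E].
Proof.
rewrite /circw (eq_bigr (fun e => fser [:: [:: e]])); last by case=> u v _; rewrite arcw_fser.
by rewrite -fser_bigallcat bigallcat1.
Qed.

End Alg.

Section Alg2.
Variable K : comPzSemiRingType.
Local Open Scope ring_scope.
Variable N : nat.
Variables (A : 'M[K]_N) (b : 'cV[K]_N) (c : 'rV[K]_N).
Local Notation node := (node N).
Local Notation pa := (@path_arcs N).
Local Notation deg := (@deg N).
Local Notation arcE := (node * node)%type.
Local Notation fser := (@fser K N A b c).
Local Notation val := (@val K N A b c).
Local Notation walk := (@walk N).
Local Notation darc := (@Defs.arc N).
Local Notation allcat := (@allcat N).

Lemma deg_lpow (l : seq arcE) k : deg (lpow l k) = (k * deg l)%N.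
Proof. elim: k => [|k IH] /=; first by rewrite /deg big_nil. by rewrite deg_cat IH mulSn. Qed.

Lemma spow_fser l k : spow (fser [:: l]) k = fser [:: lpow l k].
Proof.
elim: k => [|k IH]; first exact: fser_one.
by rewrite /spow /= -/(spow _ k) IH fser_mul /allcat /=.
Qed.

Lemma sstar_teq l n : (0 < deg l)%N ->
  teq n (sstar (fser [:: l])) (fser [seq lpow l k | k <- iota 0 n.+1]).
Proof.
move=> hd m hm; rewrite /sstar.
under eq_bigr do rewrite spow_fser fser1.
rewrite /fser big_map -big_mkcond /=.
rewrite -(big_mkord (fun k => deg (lpow l k) == m) (fun k => val (lpow l k))).
rewrite (big_nat_widen _ _ _ _ _ (hm : (m.+1 <= n.+1)%N)).
rewrite /index_iota subn0; apply: eq_bigl => k.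
case: eqP => //= hk; rewrite ltnS -hk deg_lpow.
by rewrite -{1}(muln1 k) leq_mul2l hd orbT.
Qed.

Lemma splus_teq l n : (0 < deg l)%N ->
  teq n (splus (fser [:: l])) (fser [seq lpow l k.+1 | k <- iota 0 n.+1]).
Proof.
move=> hd m hm; rewrite /splus (teq_mul (@teq_refl K n _) (sstar_teq (n:=n) hd) hm) fser_mul.
have h1 : forall t, allcat [:: l] t = map (cat l) t by move=> t; rewrite /allcat /= cats0.
by rewrite h1 -map_comp.
Qed.

Definition Pw n (E : {set arcE}) := [seq lpow (cl E) k.+1 | k <- iota 0 n.+1].

Definition Lr n :=
  \big[cat/[::]]_(n' < #|{: node}|.+1)
   \big[cat/[::]]_(t : n'.-tuple node | elem_path t)
     allcat [:: pa t]
       (\big[cat/[::]]_(C : {set {set arcE}} | accessible t C)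
          \big[allcat/[:: [::]]]_(E in C) Pw n E).

Lemma cl_perm (E : {set arcE}) (t : seq node) : uniq t -> E = [set e in circ_arcs t] ->
  perm_eq (cl E) (circ_arcs t).
Proof.
move=> hu ->; apply: uniq_perm.
- by apply: filter_uniq; apply: index_enum_uniq.
- exact: circ_arcs_uniq.
- by move=> e; rewrite mem_filter mem_index_enum andbT inE.
Qed.

Lemma cl_deg (E : {set arcE}) : circ_class E -> (0 < deg (cl E))%N.
Proof.
case/existsP => n0 /existsP [t /andP [ht /eqP hE]].
have hu : uniq t by case/and3P: ht.
by rewrite (deg_perm (cl_perm hu hE)) circ_deg.
Qed.

Lemma rhs_teq n : teq n (rhs A b c) (fser (Lr n)).
Proof.
rewrite /rhs /Lr fser_bigcat; apply: teq_bigadd => n' _.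
rewrite fser_bigcat; apply: teq_bigadd => t _.
rewrite -fser_mul pathw_fser; apply: teq_mul => //.
rewrite fser_bigcat; apply: teq_bigadd => C hC.
rewrite fser_bigallcat; apply: teq_bigmul => E hE.
rewrite circw_fser; apply: splus_teq; apply: cl_deg.
by move: hC => /andP [/forallP /(_ E) /implyP /(_ hE)].
Qed.

Fixpoint Q m (i : 'I_N) : seq (seq arcE) :=
  match m with
  | 0 => [:: [:: (inr false, inl i)]]
  | m'.+1 => \big[cat/[::]]_(j : 'I_N) [seq rcons l (inl j, inl i) | l <- Q m' j]
  end.

Lemma sum_bigcat (I : Type) (r : seq I) (P : pred I) (F : I -> seq (seq arcE)) (G : seq arcE -> K) :
  \sum_(l <- \big[cat/[::]]_(i <- r | P i) F i) G l = \sum_(i <- r | P i) \sum_(l <- F i) G l.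
Proof. apply: (big_morph (fun s => \sum_(l <- s) G l)) => [x y|]; [exact: big_cat|exact: big_nil]. Qed.

Lemma Q_val m i : (A ^+ m *m b) i ord0 = \sum_(l <- Q m i) val l.
Proof.
elim: m i => [|m IH] i.
  by rewrite expr0 mul1mx /= big_seq1 /val big_seq1.
rewrite exprS -mulmxE -mulmxA mxE /= sum_bigcat; apply: eq_bigr => j _.
rewrite IH big_map mulr_sumr; apply: eq_bigr => l _.
by rewrite /val big_rcons /= mulrC.
Qed.

Definition W n := \big[cat/[::]]_(i : 'I_N) [seq rcons l (inl i, inr true) | l <- Q n i].

Lemma SN_W n : S_N A b c n = \sum_(l <- W n) val l.
Proof.
rewrite /S_N -mulmxA mxE sum_bigcat; apply: eq_bigr => i _.
rewrite Q_val big_map mulr_sumr; apply: eq_bigr => l _.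
by rewrite /val big_rcons /= mulrC.
Qed.

End Alg2.

Lemma mem_bigcat (T : eqType) (I : Type) (r : seq I) (P : pred I) (F : I -> seq T) x :
  (x \in \big[cat/[::]]_(i <- r | P i) F i) = has (fun i => P i && (x \in F i)) r.
Proof.
elim: r => [|i r IH]; first by rewrite big_nil.
by rewrite big_cons /=; case: (P i); rewrite ?mem_cat IH.
Qed.

Lemma perm_count (T : eqType) (s1 s2 : seq T) :
  (forall x, count_mem x s1 = count_mem x s2) -> perm_eq s1 s2.
Proof. by move=> h; rewrite /perm_eq; apply/allP => x _; apply/eqP. Qed.

Lemma count_lpow (T : eqType) (a : pred T) (l : seq T) k : count a (lpow l k) = k * count a l.
Proof. by elim: k => [//|k IH] /=; rewrite count_cat IH mulSn. Qed.

Lemma idem_absorb (K : comPzSemiRingType) (idemK : forall x : K, (x + x = x)%R)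
  (I : eqType) (r : seq I) (P : pred I) (F : I -> K) y :
  y \in r -> P y -> (F y + \sum_(i <- r | P i) F i = \sum_(i <- r | P i) F i)%R.
Proof.
elim: r => [//|x r IH]; rewrite in_cons big_cons => /orP [/eqP ->|hy] hP.
  by rewrite hP addrA idemK.
case: (P x); last exact: IH.
by rewrite addrCA IH.
Qed.

Lemma idem_le (K : comPzSemiRingType) (I : eqType) (r : seq I) (P : pred I) (F : I -> K) (S : K) :
  (forall x, x \in r -> P x -> F x + S = S)%R -> (\sum_(i <- r | P i) F i + S = S)%R.
Proof.
elim: r => [|x r IH] h; first by rewrite big_nil add0r.
rewrite big_cons; case: ifP => hP.
  rewrite -addrA IH; first exact: h (mem_head _ _) hP.
  by move=> y hy; apply: h; rewrite in_cons hy orbT.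
by apply: IH => y hy; apply: h; rewrite in_cons hy orbT.
Qed.

Lemma idem_sum (K : comPzSemiRingType) (idemK : forall x : K, (x + x = x)%R)
  (I : eqType) (r1 r2 : seq I) (P1 P2 : pred I) (F : I -> K) :
  (forall x, x \in r1 -> P1 x -> exists y, [/\ y \in r2, P2 y & F x = F y]) ->
  (forall y, y \in r2 -> P2 y -> exists x, [/\ x \in r1, P1 x & F y = F x]) ->
  (\sum_(i <- r1 | P1 i) F i = \sum_(i <- r2 | P2 i) F i)%R.
Proof.
move=> h1 h2.
have e1 : (\sum_(i <- r1 | P1 i) F i + \sum_(i <- r2 | P2 i) F i = \sum_(i <- r2 | P2 i) F i)%R.
  apply: idem_le => x hx hP; have [y [hy hP2 ->]] := h1 x hx hP.
  exact: idem_absorb.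
have e2 : (\sum_(i <- r2 | P2 i) F i + \sum_(i <- r1 | P1 i) F i = \sum_(i <- r1 | P1 i) F i)%R.
  apply: idem_le => x hx hP; have [y [hy hP2 ->]] := h2 x hx hP.
  exact: idem_absorb.
by rewrite -e1 addrC e2.
Qed.

Section Fin.
Variable K : comPzSemiRingType.
Variable N : nat.
Variables (A : 'M[K]_N) (b : 'cV[K]_N) (c : 'rV[K]_N).
Local Notation node := (node N).
Local Notation pa := (@path_arcs N).
Local Notation deg := (@deg N).
Local Notation arcE := (node * node)%type.
Local Notation walk := (@walk N).
Local Notation darc := (@Defs.arc N).
Local Notation allcat := (@allcat N).
Local Notation Q := (@Q N).
Local Notation W := (@W N).

Lemma mem_bigallcat_f (I : eqType) (r : seq I) (F : I -> seq (seq arcE)) (f : I -> seq arcE) :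
  (forall i, i \in r -> f i \in F i) -> flatten (map f r) \in \big[allcat/[:: [::]]]_(i <- r) F i.
Proof.
elim: r => [|i r IH] h; first by rewrite big_nil mem_seq1.
rewrite big_cons /=; apply: allpairs_f; first by apply: h; rewrite mem_head.
by apply: IH => j hj; apply: h; rewrite in_cons hj orbT.
Qed.

Lemma mem_bigallcat_inv (I : Type) (r : seq I) (F : I -> seq (seq arcE)) y :
  y \in \big[allcat/[:: [::]]]_(i <- r) F i ->
  exists ls, all2 (fun i l => l \in F i) r ls /\ y = flatten ls.
Proof.
elim: r y => [|i r IH] y.
  by rewrite big_nil mem_seq1 => /eqP ->; exists [::].
rewrite big_cons => /allpairsP [[x z] [/= hx hz ->]].
have [ls [h1 ->]] := IH z hz.
by exists (x :: ls); rewrite /= hx h1.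
Qed.

Lemma path_inner (s : seq 'I_N) (x : node) : x != inr true -> path darc x (map inl s).
Proof.
elim: s x => [//|j s IH] x hx /=.
by rewrite IH // andbT; case: x hx => [?|[]].
Qed.

Lemma walk_W (s : seq 'I_N) i : walk (inr false :: rcons (map inl (rcons s i)) (inr true)).
Proof.
rewrite walk_cons /= last_rcons eqxx /= rcons_path map_rcons rcons_path path_inner //=.
rewrite last_rcons /= andbT.
by case: s => [//|j s] /=; rewrite last_map.
Qed.

Lemma deg_inner (s : seq 'I_N) i : deg (pa (inr false :: map inl (rcons s i))) = size s.
Proof.
elim/last_ind: s i => [|s j IH] i; first by rewrite /deg big_seq1.
rewrite map_rcons pa_rcons -cats1 deg_cat IH size_rcons /deg big_seq1.
by rewrite map_rcons last_rcons addn1.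
Qed.

Lemma Q_mem m i l : l \in Q m i -> exists s, size s = m /\ l = pa (inr false :: map inl (rcons s i)).
Proof.
elim: m i l => [|m IH] i l /=.
  by rewrite mem_seq1 => /eqP ->; exists [::].
rewrite mem_bigcat => /hasP [j _ /mapP [l' hl' ->]].
have [s [hs ->]] := IH j l' hl'.
exists (rcons s j); split; first by rewrite size_rcons hs.
by rewrite [in RHS]map_rcons pa_rcons map_rcons last_rcons.
Qed.

Lemma Q_memP m i s : size s = m -> pa (inr false :: map inl (rcons s i)) \in Q m i.
Proof.
elim: m i s => [|m IH] i s.
  by move/size0nil => ->; rewrite mem_seq1.
case/lastP: s => [//|s j] /=; rewrite size_rcons => -[hs].
rewrite mem_bigcat; apply/hasP; exists j; first exact: mem_index_enum.
rewrite /= map_rcons pa_rcons map_rcons last_rcons -map_rcons.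
by apply: map_f; apply: IH.
Qed.

Lemma W_mem n l : l \in W n -> exists s i, size s = n /\ l = pa (inr false :: rcons (map inl (rcons s i)) (inr true)).
Proof.
rewrite mem_bigcat => /hasP [i _ /mapP [l' /Q_mem [s [hs ->]] ->]].
exists s, i; split => //.
by rewrite pa_rcons map_rcons last_rcons.
Qed.

Lemma W_memP n s i : size s = n -> pa (inr false :: rcons (map inl (rcons s i)) (inr true)) \in W n.
Proof.
move=> hs; rewrite mem_bigcat; apply/hasP; exists i; first exact: mem_index_enum.
rewrite pa_rcons map_rcons last_rcons -map_rcons.
by apply: map_f; apply: Q_memP.
Qed.

Lemma deg_W (s : seq 'I_N) i : deg (pa (inr false :: rcons (map inl (rcons s i)) (inr true))) = size s.
Proof.
by rewrite pa_rcons -cats1 deg_cat deg_inner map_rcons last_rcons /deg big_seq1 addn0.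
Qed.

Lemma shape_aux (p : seq node) (x : node) :
  path darc x p -> last x p = inr true -> x != inr true -> exists s, p = rcons (map inl s) (inr true).
Proof.
elim: p x => [|y p IH] x /=; first by move=> _ -> .
case/andP => hxy hp hl hx.
case: p IH hp hl => [|z p] IH hp hl.
  by exists [::]; rewrite /= -hl.
have hy : y != inr true by case: y hxy hp {hl IH} => [?|[]] //; rewrite /= arc_out.
have [s hs] := IH y hp hl hy.
case: y hxy hp hl hy hs => [j|[]] // hxy hp hl hy hs.
  by exists (j :: s); rewrite hs.
by rewrite arc_in in hxy.
Qed.

Lemma walk_shape (w : seq node) : walk w ->
  exists s i, w = inr false :: rcons (map inl (rcons s i)) (inr true).
Proof.
case: w => [//|x p]; rewrite walk_cons => /and3P [/eqP -> hl hp].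
have [s es] := shape_aux hp (eqP hl) isT.
case/lastP: s es => [|s i] es; first by move: hp; rewrite es.
by exists s, i; rewrite es.
Qed.

Lemma walk_access (w : seq node) : walk w -> forall x y,
  x \in verts [set e in pa w] -> y \in verts [set e in pa w] ->
  connect (fun u v => ((u, v) \in [set e in pa w]) || ((v, u) \in [set e in pa w])) x y.
Proof.
case: w => [//|x0 p] hw x y hx hy.
set R : rel node := (fun u v => ((u, v) \in [set e in pa (x0 :: p)]) || ((v, u) \in [set e in pa (x0 :: p)])).
have hv : forall z, z \in verts [set e in pa (x0 :: p)] -> z \in x0 :: p.
  move=> z; rewrite inE => /existsP [[u v]]; rewrite inE /=.
  by case/andP => /mem_pa /andP [hu hv] /orP [/eqP <-|/eqP <-].
have hc : forall z, z \in x0 :: p -> connect R x0 z.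
  by apply: walk_conn => -[u v] he; rewrite /R inE he.
have hsym : connect_sym R by apply: sym_connect_sym => u v; rewrite /R orbC.
apply: connect_trans (_ : connect R x x0) _; last by apply: hc; apply: hv.
by rewrite hsym; apply: hc; apply: hv.
Qed.

Lemma walk_head (w : seq node) : walk w -> exists z, (inr false, z) \in pa w.
Proof.
case: w => [//|x p]; rewrite walk_cons => /and3P [/eqP -> hl _].
case: p hl => [|z p] hl; first by move: hl.
by exists z; rewrite pa_cons mem_head.
Qed.

End Fin.

Section Build.
Variable N : nat.
Local Notation node := (node N).
Local Notation arcE := (node * node)%type.

Lemma build_cs n (r : seq {set arcE}) (ls : seq (seq arcE)) :
  all2 (fun E l => l \in Pw n E) r ls -> {in r, forall E, circ_class E} ->
  exists cs : seq (seq node * nat),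
    [/\ all (fun p => elem_circ p.1 && (0 < p.2)) cs,
        perm_eq (flatten ls) (flatten [seq lpow (circ_arcs p.1) p.2 | p <- cs]),
        (forall p, p \in cs -> exists2 E, E \in r & E = [set e in circ_arcs p.1])
      & (forall E, E \in r -> exists2 p, p \in cs & E = [set e in circ_arcs p.1])].
Proof.
elim: r ls => [|E r IH] [|l ls] //=.
  by move=> _ _; exists [::]; split.
case/andP => hl hall hC.
have [k _ el] := mapP hl.
have /existsP [n0 /existsP [t /andP [ht /eqP hE]]] := hC E (mem_head _ _).
have hu : uniq t by case/and3P: ht.
have [cs [h1 h2 h3 h4]] : exists cs : seq (seq node * nat),
    [/\ all (fun p => elem_circ p.1 && (0 < p.2)) cs,
        perm_eq (flatten ls) (flatten [seq lpow (circ_arcs p.1) p.2 | p <- cs]),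
        (forall p, p \in cs -> exists2 E, E \in r & E = [set e in circ_arcs p.1])
      & (forall E, E \in r -> exists2 p, p \in cs & E = [set e in circ_arcs p.1])].
  by apply: IH => // E' hE'; apply: hC; rewrite in_cons hE' orbT.
exists ((tval t, k.+1) :: cs); split.
- by rewrite /= ht h1.
- by rewrite /= el; apply: perm_cat => //; apply: lpow_perm; apply: cl_perm.
- move=> p; rewrite in_cons => /orP [/eqP ->|hp].
    by exists E; rewrite ?mem_head.
  by have [E' h5 h6] := h3 p hp; exists E' => //; rewrite in_cons h5 orbT.
- move=> E'; rewrite in_cons => /orP [/eqP ->|hE'].
    by exists (tval t, k.+1); rewrite ?mem_head.
  by have [p h5 h6] := h4 E' hE'; exists p => //; rewrite in_cons h5 orbT.
Qed.

End Build.

Unset Implicit Arguments.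
Local Open Scope ring_scope.

Theorem proposition1 (K : comPzSemiRingType)
    (idemK : forall x : K, x + x = x)
    (N : nat) (hN : (1 <= N)%N)
    (A : 'M[K]_N) (b : 'cV[K]_N) (c : 'rV[K]_N) :
  S_N A b c =1 rhs A b c.
Proof.
move=> n.
rewrite (rhs_teq A b c (leqnn n)) SN_W /fser.
transitivity (\sum_(l <- W N n | deg l == n) val A b c l)%R.
  rewrite big_seq_cond [RHS]big_seq_cond; apply: eq_bigl => l /=.
  case: (boolP (l \in W N n)) => //= /W_mem [s [i [hs ->]]].
  by rewrite deg_W hs eqxx.
apply: (idem_sum idemK).
- move=> l /W_mem [s [i [hs el]]] hdeg.
  set w := inr false :: rcons (map inl (rcons s i)) (inr true).
  have hw : walk w := walk_W s i.
  have hdw : deg (path_arcs w) = n by rewrite deg_W.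
  have [t [C [k [ht hC hk hcnt hset]]]] := decomp (leqnn _) hw.
  pose rC := [seq E <- index_enum _ | E \in C].
  pose l' := path_arcs t ++ flatten [seq lpow (cl E) (k E).+1 | E <- rC].
  have hperm : perm_eq (path_arcs w) l'.
    apply: perm_count => e; rewrite hcnt /l' count_cat count_flatten sumnE big_map /rC big_map big_filter.
    congr (_ + _)%N; apply: eq_bigr => E hE.
    rewrite count_lpow count_uniq_mem ?mem_filter ?mem_index_enum ?andbT //.
    by apply: filter_uniq; apply: index_enum_uniq.
  exists l'; split; last 2 first.
  + by rewrite -(deg_perm hperm) hdw.
  + by rewrite el; apply: val_perm.
  have /andP [hwt hut] := ht.
  have hsz : (size t < #|{: node N}|.+1)%N by rewrite ltnS -(card_uniqP hut) max_card.
  rewrite /Lr mem_bigcat; apply/hasP; exists (Ordinal hsz); first exact: mem_index_enum.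
  rewrite /= mem_bigcat; apply/hasP; exists (in_tuple t); first exact: mem_index_enum.
  rewrite /= elem_path_walk hwt hut /=.
  apply: allpairs_f; first exact: mem_head.
  rewrite mem_bigcat; apply/hasP; exists C; first exact: mem_index_enum.
  apply/andP; split; last first.
    rewrite -big_filter; apply: mem_bigallcat_f => E hE; rewrite /Pw; apply: (map_f (fun j => lpow (cl E) j.+1)).
    rewrite mem_iota leq0n /= add0n ltnS.
    by rewrite -ltnS ltnW // ltnS -hdw; apply: hk; move: hE; rewrite mem_filter => /andP [].
  apply/andP; split.
    by apply/forallP => E; apply/implyP; apply: hC.
  apply/forallP => x; apply/forallP => y /=.
  rewrite -hset.
  by apply/implyP => hx; apply/implyP => hy; apply: walk_access.
- move=> l' hl' hdeg.
  move: hl'; rewrite /Lr mem_bigcat => /hasP [n' _ /=]; rewrite mem_bigcat => /hasP [t _ /andP [ht]].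
  case/allpairsP => [[x y] [/= hx hy el']].
  move: hx; rewrite mem_seq1 => /eqP ex.
  move: hy; rewrite mem_bigcat => /hasP [C _ /andP [hacc]].
  rewrite -big_filter => /mem_bigallcat_inv [ls [hall ey]].
  have hCc : {in [seq E <- index_enum _ | E \in C], forall E, circ_class E}.
    move=> E; rewrite mem_filter => /andP [hE _].
    by case/andP: hacc => /forallP /(_ E) /implyP /(_ hE).
  have [cs [h1 h2 h3 h4]] := build_cs hall hCc.
  rewrite elem_path_walk in ht; case/andP: ht => hwt hut.
  set Etot := [set e in path_arcs t] :|: \bigcup_(E in C) E.
  pose R : rel (node N) := fun u v => ((u, v) \in Etot) || ((v, u) \in Etot).
  have key : forall u v, (u, v) \in Etot ->
      ((u \in tval t) && (v \in tval t)) \/ exists2 p, p \in cs & (u \in p.1) && (v \in p.1).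
    move=> u v; rewrite in_setU inE => /orP [/mem_pa h|/bigcupP [E hE huv]]; first by left.
    right; have [|p hp eE] := h4 E; first by rewrite mem_filter hE mem_index_enum.
    by exists p => //; apply: mem_circ_arcs; move: huv; rewrite eE inE.
  have hedge : forall u v, R u v -> ((u \in tval t) && (v \in tval t)) \/ exists2 p, p \in cs & (u \in p.1) && (v \in p.1).
    move=> u v /orP [/key //|/key [/andP [h5 h6]|[p hp /andP [h5 h6]]]].
      by left; rewrite h5 h6.
    by right; exists p => //; rewrite h5 h6.
  have hconn : forall p, p \in cs -> forall z, z \in p.1 -> exists2 x, x \in tval t & connect R x z.
    move=> p hp z hz; exists (inr false).
      by have [z' hz'] := walk_head hwt; have /andP [] := mem_pa hz'.
    have hin : inr false \in verts Etot.
      have [z' hz'] := walk_head hwt.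
      rewrite inE; apply/existsP; exists (inr false, z'); apply/andP; split; last by apply/orP; left; exact: eqxx.
      by rewrite in_setU inE hz'.
    have hzv : z \in verts Etot.
      have [z' hz'] := circ_arcs_out hz.
      have [E hE eE] := h3 p hp.
      rewrite inE; apply/existsP; exists (z, z'); apply/andP; split; last by apply/orP; left; exact: eqxx.
      rewrite in_setU; apply/orP; right; apply/bigcupP; exists E.
        by move: hE; rewrite mem_filter => /andP [].
      by rewrite eE inE.
    case/andP: hacc => _ /forallP /(_ (inr false)) /forallP /(_ z) /=.
    by rewrite -/Etot hin hzv.
  have [w' [hw' hpw']] := splice_all (leqnn (size cs)) hwt h1 hedge hconn.
  exists (path_arcs w').
  have hp' : perm_eq l' (path_arcs w').
    rewrite el' ex ey perm_sym; apply: perm_trans hpw' _.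
    by rewrite perm_cat2l perm_sym.
  have [s [i ew']] := walk_shape hw'.
  have hd : deg (path_arcs w') = n by rewrite -(deg_perm hp'); apply/eqP.
  split.
  + by rewrite ew'; apply: W_memP; rewrite -(deg_W s i) -ew'.
  + by rewrite hd.
  + exact: val_perm.
Qed.
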